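(* In the setting described in the context, let $t_1,\dots,t_k$ be an enumeration of the distinct elements of $T\setminus D$. For $j=0,\dots,k$ let $A_j=D\cup\{t_1,\dots,t_j\}$. Set $c_0=\tfrac12|\Pi_D|$. For $j\ge1$, write $t_j=[e_1,e_2]$ and let $L_1,L_2\in\Pi_{A_{j-1}}$ be the circuits containing $e_1$ and $e_2$. Set $c_j=c_{j-1}-1$ if $L_2\neq (L_1)^*_{A_{j-1}}$ and $L_1,L_2$ are not both shorted with respect to $A_{j-1}$; otherwise set $c_j=c_{j-1}$. Then: (a) for every $j$, $c_j$ equals the number of circuit pairs of $\Pi_{A_j}$ that are not shorted; (b) $\bar x$ is an extreme point of $P^n$ if and only if $c_j=0$ for some $j\in\{0,\dots,k\}$, equivalently if and only if every circuit of $\Pi_{D\cup T}$ is shorted.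
   Context: Let $n\ge4$, $V=\{0,\dots,n-1\}$, and let $E=\{(u,v)\in V\times V:u\ne v\}$ be the set of arcs, written $uv$. Let $\chi_e\in\mathbb R^E$ be unit vectors and $\chi_F=\sum_{e\in F}\chi_e$. Let $\delta^\pm(w)$ be the arcs leaving/entering $w$, let $\delta^+(S)=\{uv:u\in S,v\notin S\}$, let $\mathcal S=\{S\subset V:2\le|S|\le n-2\}$, and let $x(F)=\sum_{e\in F}x_e$. The polytope is $P^n=\{x\in\mathbb R^E: x(\delta^+(w))=x(\delta^-(w))=1\ \forall w,\ x(\delta^+(S))\ge1\ \forall S\in\mathcal S,\ x\ge0\}$. Fix $\bar x\in P^n\cap\{0,\tfrac12\}^E$ and let $E_{\bar x}=\{e:\bar x_e=\tfrac12\}$. For $a\in\{0,1\}^E$ let $\mathrm{pr}(a)=\sum_{e\in E_{\bar x}}a_e\chi_e$. Let $\mathcal S_{\bar x}=\{S\in\mathcal S:\bar x(\delta^+(S))=1\}$. Define the sets $$D=\{\mathrm{pr}(\chi_{\delta^+(u)}),\mathrm{pr}(\chi_{\delta^-(u)}):u\in V\}, \qquad T=\{\mathrm{pr}(\chi_{\delta^+(S)}):S\in\mathcal S_{\bar x}\}.$$ Every vector of $D\cup T$ equals $\chi_{e_1}+\chi_{e_2}$ for two distinct arcs $e_1,e_2\in E_{\bar x}$; it is written $[e_1,e_2]=[e_2,e_1]$. Let $A$ be a set with $D\subseteq A\subseteq D\cup T$. On $E_{\bar x}$ define the relation $e\sim_A e'$ iff there is $\bar e\in E_{\bar x}$ with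 $[e,\bar e]\in A$ and $[\bar e,e']\in A$. Let $\equiv_A$ be its transitive closure; this is an equivalence relation. The equivalence classes are called circuits, and they form the circuit partition $\Pi_A$ of $E_{\bar x}$. For $L\in\Pi_A$, the set $\{\bar e\in E_{\bar x}:\exists e\in L,\ [e,\bar e]\in A\}$ is nonempty and contained in a unique circuit, denoted $L^*_A$ and called the dual of $L$. The pair $\{L,L^*_A\}$ is a circuit pair. $L$ is called shorted if $L^*_A=L$. For $A=D$ no circuit is shorted and circuits come in disjoint dual pairs, so $|\Pi_D|$ is even. *)

(* Defs.v *)
From HB Require Import structures.
From mathcomp Require Import all_boot all_order all_algebra.
From mathcomp Require Import reals.
Set Implicit Arguments. Unset Strict Implicit. Unset Printing Implicit Defensive.
Import Order.TTheory GRing.Theory Num.Theory.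
Local Open Scope ring_scope.

Definition darc (n : nat) := {p : 'I_n * 'I_n | p.1 != p.2}.
Definition atail {n} (e : darc n) : 'I_n := (val e).1.
Definition ahead {n} (e : darc n) : 'I_n := (val e).2.

Section Defs.
Variable n : nat.
Variable R : realType.

Definition deltaout (w : 'I_n) : {set darc n} := [set e | atail e == w].
Definition deltain (w : 'I_n) : {set darc n} := [set e | ahead e == w].
Definition deltaS (S : {set 'I_n}) : {set darc n} :=
  [set e | (atail e \in S) && (ahead e \notin S)].
Definition xsum (x : darc n -> R) (F : {set darc n}) : R := \sum_(e in F) x e.

Definition calS : {set {set 'I_n}} := [set S : {set 'I_n} | (2 <= #|S|)%N && (#|S| <= n - 2)%N].

Definition Pn (x : darc n -> R) : Prop :=
  [/\ forall w, xsum x (deltaout w) = 1,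
      forall w, xsum x (deltain w) = 1,
      forall S, S \in calS -> xsum x (deltaS S) >= 1
    & forall e, x e >= 0].

Definition extreme_point (P : (darc n -> R) -> Prop) (x : darc n -> R) : Prop :=
  P x /\ forall (y z : darc n -> R) (l : R), P y -> P z -> 0 < l < 1 ->
    (forall e, x e = l * y e + (1 - l) * z e) -> y = z.

Definition Ehalf (xb : darc n -> R) : {set darc n} := [set e | xb e == 2^-1].

(* 0/1 vectors supported in E_xbar are represented by their supports:
   pr(chi_F) is represented by F :&: E_xbar. *)
Definition Dset (xb : darc n -> R) : {set {set darc n}} :=
  [set deltaout u :&: Ehalf xb | u : 'I_n] :|: [set deltain u :&: Ehalf xb | u : 'I_n].
Definition Sx (xb : darc n -> R) : {set {set 'I_n}} :=
  [set S in calS | xsum xb (deltaS S) == 1].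
Definition Tset (xb : darc n -> R) : {set {set darc n}} :=
  [set deltaS S :&: Ehalf xb | S in Sx xb].

(* circuits w.r.t. a set A of vectors [e1,e2] (represented as [set e1; e2]) *)
Variable Ex : {set darc n}.

Definition simA (A : {set {set darc n}}) : rel (darc n) := fun e e' =>
  [&& e \in Ex, e' \in Ex &
      [exists eb in Ex, ([set e; eb] \in A) && ([set eb; e'] \in A)]].

Definition circuits (A : {set {set darc n}}) : {set {set darc n}} :=
  equivalence_partition (connect (simA A)) Ex.

Definition dualset (A : {set {set darc n}}) (L : {set darc n}) : {set darc n} :=
  [set eb in Ex | [exists e in L, [set e; eb] \in A]].

Definition dual (A : {set {set darc n}}) (L : {set darc n}) : {set darc n} :=
  if [pick eb in dualset A L] is Some eb then pblock (circuits A) eb else set0.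

Definition shorted (A : {set {set darc n}}) (L : {set darc n}) : bool := dual A L == L.

Definition nonshorted_pairs (A : {set {set darc n}}) : {set {set {set darc n}}} :=
  [set [set L; dual A L] | L in [set L in circuits A | ~~ shorted A L]].

Definition Aj (D : {set {set darc n}}) (ts : seq {set darc n}) (j : nat) :=
  D :|: [set t in take j ts].

Definition decr (A : {set {set darc n}}) (t : {set darc n}) : bool :=
  if enum t is [:: e1; e2] then
    let L1 := pblock (circuits A) e1 in
    let L2 := pblock (circuits A) e2 in
    (L2 != dual A L1) && ~~ (shorted A L1 && shorted A L2)
  else false.

(* c_j ; t_j = nth set0 ts (j-1) *)
Fixpoint cval (D : {set {set darc n}}) (ts : seq {set darc n}) (j : nat) : int :=
  match j with
  | 0 => (#|circuits D| %/ 2)%:Z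
  | j'.+1 => cval D ts j' - (decr (Aj D ts j') (nth set0 ts j'))%:Z
  end.

End Defs.

(* Main.v *)
Require Import Defs.
From HB Require Import structures.
From mathcomp Require Import all_boot all_order all_algebra.
From mathcomp Require Import reals ring lra.
From Stdlib Require Import FunctionalExtensionality.
Set Implicit Arguments. Unset Strict Implicit. Unset Printing Implicit Defensive.
Import Order.TTheory GRing.Theory Num.Theory.
Section GenConnect.
Lemma connect_map (T U : finType) (r : rel T) (s : rel U) (f : T -> U) x y :
  (forall x y, r x y -> connect s (f x) (f y)) -> connect r x y -> connect s (f x) (f y).
Proof.
move=> hf /connectP [p pth ->]; elim: p x pth => [|z p IH] x /=; first by rewrite connect0.
by move/andP=> [hxz hp]; apply: connect_trans (hf _ _ hxz) (IH _ hp).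
Qed.

Lemma connect_closed (T : finType) (r : rel T) (P : T -> Prop) x y :
  (forall x y, P x -> r x y -> P y) -> connect r x y -> P x -> P y.
Proof.
move=> hP /connectP [p pth ->]; elim: p x pth => [|z p IH] x //=.
by move/andP=> [hxz hp] Px; apply: IH hp (hP _ _ Px hxz).
Qed.

Lemma connect_inv (T : finType) (U : Type) (r : rel T) (phi : T -> U) x y :
  (forall x y, r x y -> phi x = phi y) -> connect r x y -> phi x = phi y.
Proof.
move=> hphi hc; apply: (@connect_closed _ r (fun z => phi x = phi z) x y) => //.
by move=> u v -> /hphi.
Qed.

Lemma connect_restrict (T : finType) (r r' : rel T) (P : T -> Prop) x y :
  (forall x y, P x -> r' x y -> P y /\ r x y) -> connect r' x y -> P x -> connect r x y.
Proof.
move=> hP /connectP [p pth ->]; elim: p x pth => [|z p IH] x /=; first by rewrite connect0.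
move/andP=> [hxz hp] Px; have [Pz rxz] := hP _ _ Px hxz.
by apply: connect_trans (connect1 rxz) (IH _ hp Pz).
Qed.
End GenConnect.

Lemma card_imset_ker (T U1 U2 : finType) (f : T -> U1) (g : T -> U2) (D : {set T}) :
  {in D &, forall x y, (f x == f y) = (g x == g y)} -> #|f @: D| = #|g @: D|.
Proof.
move=> hfg; case: (set_0Vmem D) => [hD | [x0 x0D]].
  by rewrite hD (imset0 f) (imset0 g) !cards0.
pose pre X := odflt x0 [pick x in D | f x == X].
have preP : forall x, x \in D -> pre (f x) \in D /\ f (pre (f x)) = f x.
  move=> x xD; rewrite /pre; case: pickP => [y /andP [yD /eqP ->] | /(_ x)] //=.
  by rewrite xD eqxx.
have -> : g @: D = (g \o pre) @: (f @: D).
  apply/setP => y; apply/imsetP/imsetP => [[x xD ->] | [X /imsetP [x xD ->] ->]].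
    exists (f x); first exact: imset_f.
    have [pD pE] := preP x xD; apply/eqP; rewrite /= -hfg // pE //.
  by exists (pre (f x)) => //; have [] := preP x xD.
rewrite [RHS]card_in_imset // => _ _ /imsetP [x xD ->] /imsetP [y yD ->] /= /eqP.
have [px pxe] := preP x xD; have [py pye] := preP y yD.
by rewrite -hfg // pxe pye => /eqP.
Qed.

Section Graph.
Variable n : nat.
Variable Ex : {set darc n}.
Variable A : {set {set darc n}}.
Hypothesis hA : forall t, t \in A ->
  exists a b, [/\ a != b, a \in Ex, b \in Ex & t = [set a; b]].

Definition adj (e f : darc n) : bool := [set e; f] \in A.
Definition hrel : rel (darc n * bool) := fun x y => adj x.1 y.1 && (y.2 == ~~ x.2).
Definition hc := connect hrel.
Definition gc := connect adj.

Lemma adjC e f : adj e f = adj f e.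
Proof. by rewrite /adj setUC. Qed.

Lemma adj_props e f : adj e f -> [/\ e != f, e \in Ex & f \in Ex].
Proof.
move=> /hA [a [b [ab aE bE h]]].
have hc2 : #|[set e; f]| = #|[set a; b]| by rewrite h.
rewrite !cards2 ab in hc2; have hef : e != f by move: hc2; case: (e != f).
have : e \in [set a; b] by rewrite -h !inE eqxx.
have : f \in [set a; b] by rewrite -h !inE eqxx orbT.
rewrite !inE => hf he; split => //.
  by case/orP: he => /eqP ->.
by case/orP: hf => /eqP ->.
Qed.

Lemma hrel_sym : symmetric hrel.
Proof. by move=> [a b] [c d]; rewrite /hrel /= adjC; case: b; case: d. Qed.

Lemma hc_sym x y : hc x y = hc y x.
Proof. exact: (sym_connect_sym hrel_sym). Qed.

Lemma hc_trans x y z : hc x y -> hc y z -> hc x z.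
Proof. exact: connect_trans. Qed.

Lemma hc1 a b c : adj a b -> hc (a, c) (b, ~~ c).
Proof. by move=> h; apply: connect1; rewrite /hrel /= h eqxx. Qed.

Definition fl (x : darc n * bool) := (x.1, ~~ x.2).

Lemma hc_fl x y : hc (fl x) (fl y) = hc x y.
Proof.
have H : forall u v, hc u v -> hc (fl u) (fl v).
  move=> u v; apply: (@connect_map _ _ hrel hrel fl) => p q /andP [h1 /eqP h2].
  by apply: connect1; rewrite /hrel /= h1 h2 eqxx.
apply/idP/idP => [|]; last exact: H.
by move/H; rewrite /fl /= !negbK -!surjective_pairing.
Qed.

Lemma hc_flb a b c d : hc (a, ~~ b) (c, ~~ d) = hc (a, b) (c, d).
Proof. exact: (hc_fl (a, b) (c, d)). Qed.

Lemma gc_sym : symmetric gc.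
Proof. apply: sym_connect_sym; exact: adjC. Qed.

Lemma hc_gc x y : hc x y -> gc x.1 y.1.
Proof.
by apply: (@connect_map _ _ _ _ fst) => p q /andP [h _]; apply: connect1.
Qed.

Lemma gc_hc e f : gc e f -> exists b, hc (e, false) (f, b).
Proof.
move=> h; apply: (@connect_closed _ adj (fun g => exists b, hc (e, false) (g, b)) e f) => //.
  move=> u v [b hb] huv; exists (~~ b); apply: hc_trans hb (hc1 _ huv).
by exists false; apply: connect0.
Qed.

Lemma simA_hc e f : connect (simA Ex A) e f = hc (e, false) (f, false).
Proof.
apply/idP/idP.
  apply: (@connect_map _ _ _ _ (fun g => (g, false))) => u v.
  move=> /and3P [_ _ /existsP [eb /and3P [_ h1 h2]]].
  apply: hc_trans (hc1 false h1) _; exact: (hc1 true h2).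
move=> h.
have := (@connect_closed _ hrel
  (fun y => if y.2 then exists g, connect (simA Ex A) e g /\ adj g y.1
            else connect (simA Ex A) e y.1) (e, false) (f, false)).
apply => //; last exact: connect0.
move=> [a b] [c d] /= Pab /andP [/= hac /eqP /= ->]; case: b Pab => /=.
  move=> [g [hg hga]]; apply: connect_trans hg (connect1 _).
  have [_ gE aE] := adj_props hga; have [_ _ cE] := adj_props hac.
  by rewrite /simA gE cE /=; apply/existsP; exists a; rewrite aE /=; apply/andP.
by move=> hea; exists a.
Qed.

Definition C e := [set f in Ex | hc (e, false) (f, false)].
Definition C' e := [set f in Ex | hc (e, true) (f, false)].

Lemma circuitsE : circuits Ex A = [set C e | e in Ex].
Proof.
rewrite /circuits /equivalence_partition; apply: eq_imset => e.
by apply/setP => f; rewrite !inE simA_hc.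
Qed.

Lemma circ_equiv : {in Ex & &, equivalence_rel (connect (simA Ex A))}.
Proof.
move=> x y z _ _ _; rewrite !simA_hc; split; first exact: connect0.
move=> hxy; apply/idP/idP => h.
  by apply: hc_trans h; rewrite hc_sym.
exact: hc_trans hxy h.
Qed.

Lemma circ_triv : trivIset (circuits Ex A).
Proof. by have /and3P [] := equivalence_partitionP circ_equiv. Qed.

Lemma C_self e : e \in Ex -> e \in C e.
Proof. by move=> eE; rewrite inE eE; apply: connect0. Qed.

Lemma pblockC e : e \in Ex -> pblock (circuits Ex A) e = C e.
Proof.
move=> eE; apply: def_pblock; first exact: circ_triv.
  by rewrite circuitsE; apply: imset_f.
exact: C_self.
Qed.

Lemma C_eq e f : hc (e, false) (f, false) -> C e = C f.
Proof.
move=> h; apply/setP => g; rewrite !inE; case: (g \in Ex) => //=.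
apply/idP/idP => h2; last exact: hc_trans h h2.
by apply: hc_trans h2; rewrite hc_sym.
Qed.

Lemma C'_eq e f : hc (e, true) (f, false) -> C' e = C f.
Proof.
move=> h; apply/setP => g; rewrite !inE; case: (g \in Ex) => //=.
apply/idP/idP => h2; last exact: hc_trans h h2.
by apply: hc_trans h2; rewrite hc_sym.
Qed.

Hypothesis hnb : forall e, e \in Ex -> exists f, adj e f.

Lemma dualC e : e \in Ex -> dual Ex A (C e) = C' e.
Proof.
move=> eE; rewrite /dual; case: pickP => [eb | none].
  rewrite /dualset inE => /andP [ebE /existsP [e' /andP [e'C he']]].
  rewrite pblockC //; symmetry; apply: C'_eq.
  move: e'C; rewrite inE => /andP [_ h1].
  rewrite -hc_flb /=; apply: hc_trans h1 _; exact: (hc1 false he').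
have [f hf] := hnb eE; have [_ _ fE] := adj_props hf.
have := none f; rewrite /dualset inE fE /=.
by move/existsP => []; exists e; rewrite C_self.
Qed.

Definition bip e := ~~ hc (e, true) (e, false).

Lemma shortedC e : e \in Ex -> shorted Ex A (C e) = ~~ bip e.
Proof.
move=> eE; rewrite /shorted dualC // /bip negbK; apply/eqP/idP => [h | h].
  by have := C_self eE; rewrite -h inE => /andP [].
by apply: C'_eq.
Qed.


Definition K e := [set f in Ex | gc e f].
Definition U := [set e in Ex | bip e].
Definition FK := [set K e | e in U].

Lemma gc_hcE e f : gc e f = hc (e, false) (f, false) || hc (e, true) (f, false).
Proof.
apply/idP/orP => [/gc_hc [[] hb] | [] /hc_gc //].
  by right; rewrite -hc_flb.
by left.
Qed.

Lemma gc_trans e f g : gc e f -> gc f g -> gc e g.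
Proof. exact: connect_trans. Qed.

Lemma gc_refl e : gc e e.
Proof. exact: connect0. Qed.

Lemma K_eq e f : gc e f -> K e = K f.
Proof.
move=> h; apply/setP => g; rewrite !inE; case: (g \in Ex) => //=.
apply/idP/idP => h2; last exact: gc_trans h h2.
by apply: gc_trans h2; rewrite gc_sym.
Qed.

Lemma K_eqb e f : e \in Ex -> f \in Ex -> (K e == K f) = gc e f.
Proof.
move=> eE fE; apply/eqP/idP => [h | /K_eq //].
have : f \in K f by rewrite inE fE gc_refl.
by rewrite -h inE => /andP [].
Qed.

Lemma K_in e f : f \in K e -> gc e f.
Proof. by rewrite inE => /andP []. Qed.

Lemma C'_eq2 e f : hc (e, false) (f, false) -> C' e = C' f.
Proof.
move=> h; apply/setP => g; rewrite !inE; case: (g \in Ex) => //=.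
rewrite -hc_flb /= in h.
apply/idP/idP => h2; last exact: hc_trans h h2.
by apply: hc_trans h2; rewrite hc_sym.
Qed.

Lemma pair_eqb e f : e \in Ex -> f \in Ex ->
  ([set C e; C' e] == [set C f; C' f]) = gc e f.
Proof.
move=> eE fE; apply/eqP/idP => [h | ].
  have : C f \in [set C e; C' e] by rewrite h !inE eqxx.
  rewrite !inE => /orP [] /eqP hf; have := C_self fE; rewrite hf inE => /andP [_ h2];
    rewrite gc_hcE h2 ?orbT //.
rewrite gc_hcE => /orP [] h.
  by rewrite (C_eq h) (C'_eq2 h).
rewrite (C'_eq h); rewrite hc_sym -hc_flb /= in h; rewrite (C'_eq h).
by rewrite setUC.
Qed.

Lemma bip_gc e f : gc e f -> bip e = bip f.
Proof.
have H : forall e f, gc e f -> bip f -> bip e.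
  move=> u v /gc_hc [b hb]; apply: contra => huu.
  have h1 : hc (v, b) (v, ~~ b).
    have ha : hc (v, b) (u, false) by rewrite hc_sym.
    have hb' : hc (u, false) (u, true) by rewrite hc_sym.
    have hc' : hc (u, true) (v, ~~ b) by rewrite -hc_flb /= negbK.
    exact: hc_trans (hc_trans ha hb') hc'.
  by case: b h1 hb => //= h1 _; rewrite hc_sym.
move=> h; apply/idP/idP; apply: H => //; by rewrite gc_sym.
Qed.

Lemma ns_pairsE : nonshorted_pairs Ex A = [set [set C e; C' e] | e in U].
Proof.
rewrite /nonshorted_pairs circuitsE; apply/setP => X; apply/imsetP/imsetP.
  move=> [L]; rewrite inE => /andP [/imsetP [e eE ->] hs ->].
  exists e; first by move: hs; rewrite shortedC // negbK inE eE.
  by rewrite dualC.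
move=> [e]; rewrite inE => /andP [eE be] ->; exists (C e).
  by rewrite inE imset_f //= shortedC // be.
by rewrite dualC.
Qed.

Lemma UsubE e : e \in U -> e \in Ex.
Proof. by rewrite inE => /andP []. Qed.

Lemma card_ns : #|nonshorted_pairs Ex A| = #|FK|.
Proof.
rewrite ns_pairsE /FK; apply: card_imset_ker => e f /UsubE eE /UsubE fE.
by rewrite pair_eqb // K_eqb.
Qed.

Lemma C'_nb e f : adj e f -> C' e = C f.
Proof. by move=> h; apply: C'_eq; apply: (hc1 true h). Qed.

Lemma pair_mem e L g : e \in Ex -> L \in [set C e; C' e] -> g \in L -> gc e g.
Proof.
move=> eE; rewrite !inE => /orP [] /eqP -> ; rewrite inE => /andP [_ h]; rewrite gc_hcE h ?orbT //.
Qed.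

Lemma pair_ne e L : e \in Ex -> L \in [set C e; C' e] -> exists g, g \in L.
Proof.
move=> eE; rewrite !inE => /orP [] /eqP ->; first by exists e; apply: C_self.
have [f hf] := hnb eE; have [_ _ fE] := adj_props hf.
by exists f; rewrite (C'_nb hf); apply: C_self.
Qed.

Lemma all_bip_card : (forall e, e \in Ex -> bip e) ->
  #|circuits Ex A| = (#|nonshorted_pairs Ex A| * 2)%N.
Proof.
move=> hb; rewrite ns_pairsE; apply: card_uniform_partition.
  move=> _ /imsetP [e eU ->]; rewrite cards2.
  have eE := UsubE eU; suff -> : C e != C' e by [].
  apply/eqP => h; have := C_self eE; rewrite h inE => /andP [_].
  by move: (hb e eE); rewrite /bip => /negbTE ->.
apply/and3P; split.
- rewrite circuitsE eqEsubset; apply/andP; split.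
    apply/bigcupsP => _ /imsetP [e eU ->]; apply/subsetP => L.
    have eE := UsubE eU.
    rewrite !inE => /orP [] /eqP ->; first by apply: imset_f.
    have [f hf] := hnb eE; have [_ _ fE] := adj_props hf.
    by rewrite (C'_nb hf); apply: imset_f.
  apply/subsetP => _ /imsetP [e eE ->]; apply/bigcupP; exists [set C e; C' e].
    by apply: imset_f; rewrite inE eE hb.
  by rewrite !inE eqxx.
- apply/trivIsetP => _ _ /imsetP [e eU ->] /imsetP [f fU ->]; apply: contraR.
  have eE := UsubE eU; have fE := UsubE fU.
  case/pred0Pn => L /andP [hLe hLf]; apply/eqP/eqP; rewrite pair_eqb //.
  have [g hg] := pair_ne eE hLe.
  by apply: gc_trans (pair_mem eE hLe hg) _; rewrite gc_sym; apply: pair_mem fE hLf hg.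
- apply/imsetP => [[e eU h]].
  have : C e \in [set C e; C' e] by rewrite !inE eqxx.
  by rewrite -h inE.
Qed.

Lemma const_part (W : {set darc n}) x : x \in W -> W \subset Ex -> (forall e, e \in W -> gc x e) ->
  #|[set K e | e in U :&: W]| = bip x.
Proof.
move=> xW WE hW; have xE : x \in Ex := subsetP WE x xW.
case hbx: (bip x).
  have -> : [set K e | e in U :&: W] = [set K x].
    apply/setP => X; rewrite inE; apply/imsetP/eqP => [[e eUW ->] | ->].
      by move: eUW; rewrite inE => /andP [_ /hW]; rewrite gc_sym => /K_eq.
    by exists x => //; rewrite !inE xE hbx xW.
  by rewrite cards1.
apply/eqP; rewrite cards_eq0 imset_eq0; apply/eqP/setP => e; rewrite !inE.
apply/negbTE; apply/andP => [[/andP [eE be] eW]].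
by move: be; rewrite -(bip_gc (hW e eW)) hbx.
Qed.

Lemma card_split (W1 W2 : {set darc n}) :
  (forall e f, e \in W1 -> f \in W2 -> ~~ gc e f) ->
  #|[set K e | e in U :&: (W1 :|: W2)]| =
  (#|[set K e | e in U :&: W1]| + #|[set K e | e in U :&: W2]|)%N.
Proof.
move=> hW; rewrite setIUr imsetU cardsU.
suff -> : [set K e | e in U :&: W1] :&: [set K e | e in U :&: W2] = set0.
  by rewrite cards0 subn0.
apply/setP => X; rewrite !inE; apply/negbTE/andP => [[/imsetP [e eW ->] /imsetP [f fW /eqP]]].
move: eW fW; rewrite !inE => /andP [/andP [eE _] eW1] /andP [/andP [fE _] fW2].
by rewrite K_eqb // => hef; have := hW e f eW1 fW2; rewrite hef.
Qed.
End Graph.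


Lemma set2_eqb (T : finType) (u v a b : T) : a != b ->
  ([set u; v] == [set a; b]) = ((u == a) && (v == b)) || ((u == b) && (v == a)).
Proof.
move=> ab; apply/eqP/idP => [h | /orP [] /andP [/eqP -> /eqP ->] //]; last by rewrite setUC.
have hc2 : #|[set u; v]| = #|[set a; b]| by rewrite h.
rewrite !cards2 ab in hc2; have uv : u != v by move: hc2; case: (u != v).
have : u \in [set a; b] by rewrite -h !inE eqxx.
have : v \in [set a; b] by rewrite -h !inE eqxx orbT.
rewrite !inE; case/orP => /eqP hv; case/orP => /eqP hu; subst; rewrite ?eqxx ?orbT //.
  by rewrite eqxx in uv.
by rewrite eqxx in uv.
Qed.

Section Step.
Variable n : nat.
Variable Ex : {set darc n}.
Variable A : {set {set darc n}}.
Hypothesis hA : forall t, t \in A ->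
  exists a b, [/\ a != b, a \in Ex, b \in Ex & t = [set a; b]].
Hypothesis hnb : forall e, e \in Ex -> exists f, adj A e f.
Variables e1 e2 : darc n.
Hypothesis h12 : e1 != e2.
Hypothesis e1E : e1 \in Ex.
Hypothesis e2E : e2 \in Ex.

Let A' := [set e1; e2] |: A.

Lemma hA' : forall t, t \in A' ->
  exists a b, [/\ a != b, a \in Ex, b \in Ex & t = [set a; b]].
Proof.
move=> t; rewrite in_setU1 => /orP [/eqP -> | /hA //].
by exists e1, e2.
Qed.

Lemma adj'E u v : adj A' u v =
  [|| adj A u v, (u == e1) && (v == e2) | (u == e2) && (v == e1)].
Proof. by rewrite /adj in_setU1 set2_eqb // orbC. Qed.

Lemma hnb' : forall e, e \in Ex -> exists f, adj A' e f.
Proof. by move=> e /hnb [f hf]; exists f; rewrite adj'E hf. Qed.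

Lemma hc_sub x y : hc A x y -> hc A' x y.
Proof.
apply: connect_sub => u v /andP [h1 h2]; apply: connect1.
by rewrite /hrel adj'E h1 h2.
Qed.

Lemma gc_sub x y : gc A x y -> gc A' x y.
Proof.
apply: connect_sub => u v h1; apply: connect1; by rewrite adj'E h1.
Qed.

Section Out.
Variable e : darc n.
Hypothesis ne1 : ~~ gc A e e1.
Hypothesis ne2 : ~~ gc A e e2.

Lemma out_hc b x : hc A' (e, b) x -> hc A (e, b) x.
Proof.
move=> h; apply: (@connect_restrict _ _ _ (fun y => gc A e y.1)) h _; last exact: gc_refl.
move=> u v hu /andP [h1 h2].
have hadj : adj A u.1 v.1.
  move: h1; rewrite adj'E => /or3P [//| /andP [/eqP hu1 _] | /andP [/eqP hu1 _]].
    by move: hu; rewrite hu1 => hu; move: ne1; rewrite hu.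
  by move: hu; rewrite hu1 => hu; move: ne2; rewrite hu.
split; first exact: gc_trans hu (connect1 hadj).
by rewrite /hrel hadj h2.
Qed.

Lemma out_gc f : gc A' e f -> gc A e f.
Proof.
move=> h; apply: (@connect_restrict _ _ _ (fun y => gc A e y)) h _; last exact: gc_refl.
move=> u v hu h1.
have hadj : adj A u v.
  move: h1; rewrite adj'E => /or3P [//| /andP [/eqP hu1 _] | /andP [/eqP hu1 _]].
    by move: hu; rewrite hu1 => hu; move: ne1; rewrite hu.
  by move: hu; rewrite hu1 => hu; move: ne2; rewrite hu.
by split; first exact: gc_trans hu (connect1 hadj).
Qed.

Lemma out_K : K Ex A' e = K Ex A e.
Proof.
apply/setP => f; rewrite !inE; case: (f \in Ex) => //=.
by apply/idP/idP => [/out_gc | /gc_sub].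
Qed.

Lemma out_bip : bip A' e = bip A e.
Proof. by rewrite /bip; congr negb; apply/idP/idP => [/out_hc | /hc_sub]. Qed.
End Out.

Lemma in_gc e : gc A e e1 || gc A e e2 -> gc A' e e1.
Proof.
case/orP => h; first exact: gc_sub.
apply: gc_trans (gc_sub h) (connect1 _); by rewrite adj'E eqxx eqxx !orbT.
Qed.

Lemma new1 b : hc A' (e1, b) (e2, ~~ b).
Proof. by apply: connect1; rewrite /hrel adj'E !eqxx orbT /=. Qed.
Lemma new2 b : hc A' (e2, b) (e1, ~~ b).
Proof. by apply: connect1; rewrite /hrel adj'E !eqxx !orbT /=. Qed.

Lemma hc_edge_eq (A0 : {set {set darc n}}) z x y : hrel A0 x y -> hc A0 z x = hc A0 z y.
Proof.
move=> h; apply/idP/idP => h2; first exact: connect_trans h2 (connect1 h).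
apply: connect_trans h2 _; apply: connect1; by rewrite hrel_sym.
Qed.

Lemma hcxx (A0 : {set {set darc n}}) x : hc A0 x x.
Proof. exact: connect0. Qed.

Lemma bip'_notbip : ~~ bip A e1 -> ~~ bip A' e1.
Proof. by rewrite /bip !negbK => /hc_sub. Qed.

Lemma bip'_nogc : ~~ gc A e1 e2 -> bip A' e1 = bip A e1 && bip A e2.
Proof.
move=> ng; case b1: (bip A e1) => /=; last by apply/negbTE; apply: bip'_notbip; rewrite b1.
case b2: (bip A e2).
  pose phi (x : darc n * bool) := if gc A e1 x.1 then hc A (e1, false) x
                                  else if gc A e2 x.1 then hc A (e2, true) x else false.
  have hphi : forall x y, hrel A' x y -> phi x = phi y.
    move=> [u b] [v c] /andP [/= h1 /eqP /= ->].
    move: h1; rewrite adj'E => /or3P [h | /andP [/eqP -> /eqP ->] | /andP [/eqP -> /eqP ->]].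
    - rewrite /phi /=.
      have -> : gc A e1 v = gc A e1 u.
        apply/idP/idP => hh; first by apply: gc_trans hh (connect1 _); rewrite adjC.
        exact: gc_trans hh (connect1 h).
      have -> : gc A e2 v = gc A e2 u.
        apply/idP/idP => hh; first by apply: gc_trans hh (connect1 _); rewrite adjC.
        exact: gc_trans hh (connect1 h).
      by rewrite -!(@hc_edge_eq A _ (u, b) (v, ~~ b)) //= /hrel h eqxx.
    - rewrite /phi /= (gc_refl A e1) (negbTE ng) (gc_refl A e2).
      move: b1 b2; rewrite /bip; case: b => /= /negbTE h1 /negbTE h2.
        by rewrite hc_sym h1 h2.
      by rewrite !hcxx.
    - rewrite /phi /=.
      have -> : gc A e1 e2 = false by apply/negbTE.
      rewrite (gc_refl A e1) (gc_refl A e2).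
      move: b1 b2; rewrite /bip; case: b => /= /negbTE h1 /negbTE h2.
        by rewrite !hcxx.
      by rewrite h2 hc_sym h1.
  rewrite /bip; apply/negP => h.
  have := connect_inv hphi h; rewrite /phi /= gc_refl hcxx.
  by move: b1; rewrite /bip => /negbTE; rewrite hc_sym => ->.
apply/negP => h; move: b2; rewrite /bip => /negbFE h2.
have h2' : hc A (e2, false) (e2, true) by rewrite hc_sym.
have X : hc A' (e1, true) (e1, false).
  apply: hc_trans (new1 true) _; apply: hc_trans (hc_sub h2') _.
  exact: (new2 true).
by move: h; rewrite /bip X.
Qed.

Lemma bip'_gc : gc A e1 e2 -> bip A' e1 = bip A e1 && hc A (e1, true) (e2, false).
Proof.
move=> hg; case b1: (bip A e1) => /=; last by apply/negbTE; apply: bip'_notbip; rewrite b1.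
case hh: (hc A (e1, true) (e2, false)).
  have h2t : hc A (e1, false) (e2, true) by rewrite -hc_flb.
  have h2f : hc A (e1, false) (e2, false) = false.
    apply/negbTE/negP => h; move: b1; rewrite /bip => /negP; apply.
    by apply: hc_trans hh _; rewrite hc_sym.
  pose phi (x : darc n * bool) := if gc A e1 x.1 then hc A (e1, false) x else false.
  have hphi : forall x y, hrel A' x y -> phi x = phi y.
    move=> [u b] [v c] /andP [/= h1 /eqP /= ->].
    move: h1; rewrite adj'E => /or3P [h | /andP [/eqP -> /eqP ->] | /andP [/eqP -> /eqP ->]].
    - rewrite /phi /=.
      have -> : gc A e1 v = gc A e1 u.
        apply/idP/idP => hh'; first by apply: gc_trans hh' (connect1 _); rewrite adjC.
        exact: gc_trans hh' (connect1 h).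
      by rewrite -!(@hc_edge_eq A _ (u, b) (v, ~~ b)) //= /hrel h eqxx.
    - rewrite /phi /= gc_refl hg.
      move: b1; rewrite /bip; case: b => /= /negbTE h1.
        by rewrite hc_sym h1 h2f.
      by rewrite h2t (hcxx _ (e1, false)).
    - rewrite /phi /= gc_refl hg.
      move: b1; rewrite /bip; case: b => /= /negbTE h1.
        by rewrite h2t (hcxx _ (e1, false)).
      by rewrite h2f hc_sym h1.
  rewrite /bip; apply/negP => h.
  have := connect_inv hphi h; rewrite /phi /= gc_refl hcxx.
  by move: b1; rewrite /bip => /negbTE; rewrite hc_sym => ->.
apply/negbTE; rewrite /bip negbK.
have [b hb] := gc_hc hg.
case: b hb => hb; first by move: hb; rewrite (hc_flb A e1 true e2 false) hh.
apply: hc_trans (new1 true) _; rewrite hc_sym; exact: hc_sub.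
Qed.


Let out := [set e in Ex | ~~ gc A e e1 && ~~ gc A e e2].
Let inn := [set e in Ex | gc A e e1 || gc A e e2].

Lemma U_split (A0 : {set {set darc n}}) : U Ex A0 = U Ex A0 :&: (out :|: inn).
Proof.
apply/setP => e; rewrite !inE; case eE: (e \in Ex) => //=.
by case: (bip A0 e); case: (gc A e e1); case: (gc A e e2).
Qed.

Lemma FK_A : #|FK Ex A| =
  (#|[set K Ex A e | e in U Ex A :&: out]| + #|[set K Ex A e | e in U Ex A :&: inn]|)%N.
Proof.
rewrite /FK {1}(U_split A) card_split // => e f.
rewrite !inE => /andP [_ /andP [ne1 ne2]] /andP [_ hf]; apply/negP => hef.
case/orP: hf => hf.
  by move: ne1; rewrite (gc_trans hef hf).
by move: ne2; rewrite (gc_trans hef hf).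
Qed.

Lemma FK_A' : #|FK Ex A'| =
  (#|[set K Ex A' e | e in U Ex A' :&: out]| + #|[set K Ex A' e | e in U Ex A' :&: inn]|)%N.
Proof.
rewrite /FK {1}(U_split A') card_split // => e f.
rewrite !inE => /andP [_ /andP [ne1 ne2]] /andP [_ hf]; apply/negP => /(out_gc ne1 ne2) hef.
case/orP: hf => hf.
  by move: ne1; rewrite (gc_trans hef hf).
by move: ne2; rewrite (gc_trans hef hf).
Qed.

Lemma out_eq : [set K Ex A' e | e in U Ex A' :&: out] = [set K Ex A e | e in U Ex A :&: out].
Proof.
have -> : U Ex A' :&: out = U Ex A :&: out.
  apply/setP => e; rewrite !inE; case: (e \in Ex) => //=.
  case ho: (~~ gc A e e1 && ~~ gc A e e2); last by rewrite !andbF.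
  by case/andP: ho => ne1 ne2; rewrite out_bip.
apply: eq_in_imset => e; rewrite !inE => /andP [_ /andP [_ /andP [ne1 ne2]]].
exact: out_K.
Qed.

Lemma inn_sub : inn \subset Ex.
Proof. by apply/subsetP => e; rewrite inE => /andP []. Qed.

Lemma e1_inn : e1 \in inn.
Proof. by rewrite inE e1E gc_refl. Qed.

Lemma in_A' : #|[set K Ex A' e | e in U Ex A' :&: inn]| = bip A' e1.
Proof.
apply: const_part; [exact: e1_inn | exact: inn_sub |] => e.
by rewrite inE => /andP [_ /in_gc]; rewrite gc_sym.
Qed.

Lemma in_A_gc : gc A e1 e2 -> #|[set K Ex A e | e in U Ex A :&: inn]| = bip A e1.
Proof.
move=> hg; apply: const_part; [exact: e1_inn | exact: inn_sub |] => e.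
rewrite inE => /andP [_ /orP [] h]; first by rewrite gc_sym.
by apply: gc_trans hg _; rewrite gc_sym.
Qed.

Lemma in_A_nogc : ~~ gc A e1 e2 ->
  #|[set K Ex A e | e in U Ex A :&: inn]| = (bip A e1 + bip A e2)%N.
Proof.
move=> ng.
have -> : inn = [set e in Ex | gc A e e1] :|: [set e in Ex | gc A e e2].
  by apply/setP => e; rewrite !inE andb_orr.
rewrite card_split //.
- rewrite (@const_part _ _ A _ e1) ?(@const_part _ _ A _ e2) //.
  + by rewrite inE e2E gc_refl.
  + by apply/subsetP => e; rewrite inE => /andP [].
  + by move=> e; rewrite inE gc_sym => /andP [].
  + by rewrite inE e1E gc_refl.
  + by apply/subsetP => e; rewrite inE => /andP [].
  + by move=> e; rewrite inE gc_sym => /andP [].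
- move=> e f; rewrite !inE => /andP [_ he] /andP [_ hf]; apply/negP => hef.
  move: ng; rewrite gc_sym in he; by rewrite (gc_trans (gc_trans he hef) hf).
Qed.

Lemma step_card : (#|FK Ex A| = #|FK Ex A'| +
   (~~ hc A (e1, true) (e2, false) && (bip A e1 || bip A e2)))%N.
Proof.
rewrite FK_A FK_A' out_eq in_A' -addnA; congr (_ + _)%N.
case hg: (gc A e1 e2).
  rewrite in_A_gc // bip'_gc // -(bip_gc hg) orbb.
  by case: (bip A e1); case: (hc A (e1, true) (e2, false)).
have ng : ~~ gc A e1 e2 by rewrite hg.
rewrite in_A_nogc // bip'_nogc //.
have -> : hc A (e1, true) (e2, false) = false.
  by apply/negbTE; apply: contra ng => /hc_gc.
by case: (bip A e1); case: (bip A e2).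
Qed.

End Step.

Lemma decr_char n (Ex : {set darc n}) (A : {set {set darc n}}) (t : {set darc n}) e1 e2 :
  (forall t, t \in A -> exists a b, [/\ a != b, a \in Ex, b \in Ex & t = [set a; b]]) ->
  (forall e, e \in Ex -> exists f, adj A e f) ->
  enum t = [:: e1; e2] -> e1 \in Ex -> e2 \in Ex ->
  decr Ex A t = ~~ hc A (e1, true) (e2, false) && (bip A e1 || bip A e2).
Proof.
move=> hA hnb Et e1E e2E; rewrite /decr Et /= !(pblockC hA) // (dualC hA hnb) //.
rewrite !(shortedC hA hnb) //.
have -> : (C Ex A e2 == C' Ex A e1) = hc A (e1, true) (e2, false).
  apply/eqP/idP => [h | h]; last by rewrite (@C'_eq _ Ex A _ _ h).
  by have := @C_self _ Ex A e2 e2E; rewrite h inE => /andP [].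
by rewrite negb_and !negbK.
Qed.

Lemma iter_swap (T : Type) (x y : T -> T) k c :
  iter k (y \o x) (y c) = y (iter k (x \o y) c).
Proof. by elim: k => //= k ->. Qed.

Lemma pal (T : finType) (E : {set T}) (x y : T -> T) :
  involutive x -> involutive y ->
  (forall a, a \in E -> x a \in E) -> (forall a, a \in E -> y a \in E) ->
  (forall a, a \in E -> x a != a) -> (forall a, a \in E -> y a != a) ->
  forall k a, a \in E -> x (iter k (y \o x) a) != a.
Proof.
move=> ix iy xE yE xn yn k; elim: k x y ix iy xE yE xn yn => [|k IH] x y ix iy xE yE xn yn a aE.
  exact: xn.
rewrite iterSr /= iter_swap; apply/eqP => h.
have h2 : y (iter k (x \o y) (x a)) = x a by rewrite -[in RHS]h ix.
by have := IH y x iy ix yE xE yn xn (x a) (xE a aE); rewrite h2 eqxx.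
Qed.

Local Open Scope ring_scope.

Definition oth n (S : {set darc n}) a := odflt a [pick b in S :\ a].

Lemma oth2 n (a b : darc n) : a != b -> oth [set a; b] a = b.
Proof.
move=> ab; rewrite /oth; case: pickP => [c | /(_ b)] /=.
  by rewrite !inE => /andP [ca /orP [] /eqP //]; move/eqP: ca.
by rewrite !inE eqxx orbT eq_sym ab.
Qed.

Lemma oth_props n (S : {set darc n}) a : #|S| = 2%N -> a \in S ->
  [/\ oth S a \in S, oth S a != a, oth S (oth S a) = a & S = [set a; oth S a]].
Proof.
move/eqP/cards2P => [p [q [pq ->]]].
have h1 : oth [set p; q] p = q := oth2 pq.
have h2 : oth [set p; q] q = p by rewrite setUC oth2 // eq_sym.
rewrite !inE => /orP [] /eqP ->.
  rewrite h1 h2; split => //; first by rewrite eqxx orbT.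
  by rewrite eq_sym.
rewrite h2 h1; split => //; first by rewrite eqxx.
by rewrite setUC.
Qed.

Section Main.
Variable n : nat.
Variable R : realType.
Variable xb : darc n -> R.
Hypothesis hP : Pn xb.
Hypothesis hhalf : forall e, xb e = 0 \/ xb e = 2^-1.

Local Notation Ex := (Ehalf xb).
Local Notation D := (Dset xb).
Local Notation T := (Tset xb).

Lemma inEx e : (e \in Ex) = (xb e == 2^-1).
Proof. by rewrite inE. Qed.

Lemma xb_out e : e \notin Ex -> xb e = 0.
Proof. by rewrite inEx; case: (hhalf e) => -> //; rewrite eqxx. Qed.

Lemma xb_in e : e \in Ex -> xb e = 2^-1.
Proof. by rewrite inEx => /eqP. Qed.

Lemma sum_Ex (d : darc n -> R) (F : {set darc n}) : (forall e, e \notin Ex -> d e = 0) ->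
  \sum_(e in F) d e = \sum_(e in F :&: Ex) d e.
Proof.
move=> hd; rewrite (big_setID Ex) /= [X in _ + X]big1 ?addr0 // => e.
by rewrite !inE => /andP [h _]; apply: hd; rewrite inE.
Qed.

Lemma xsum_half F : xsum xb F = 2^-1 * (#|F :&: Ex|)%:R.
Proof.
rewrite /xsum (sum_Ex _ xb_out) (eq_bigr (fun _ => 2^-1)) ?sumr_const ?mulr_natr //.
by move=> e; rewrite inE => /andP [_ /xb_in].
Qed.

Lemma card_of_one F : xsum xb F = 1 -> #|F :&: Ex| = 2%N.
Proof.
rewrite xsum_half => h.
have : (#|F :&: Ex|%:R : R) = 2 * (2^-1 * #|F :&: Ex|%:R).
  by rewrite mulrA mulfV ?mul1r // pnatr_eq0.
by rewrite h mulr1 => /eqP; rewrite eqr_nat => /eqP.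
Qed.

Lemma pair_of F : xsum xb F = 1 ->
  exists a b, [/\ a != b, a \in Ex, b \in Ex & F :&: Ex = [set a; b]].
Proof.
move/card_of_one/eqP/cards2P => [a [b [ab h]]]; exists a, b; split => //.
  have : a \in F :&: Ex by rewrite h !inE eqxx.
  by rewrite inE => /andP [].
have : b \in F :&: Ex by rewrite h !inE eqxx orbT.
by rewrite inE => /andP [].
Qed.

Lemma hA_DT t : t \in D :|: T ->
  exists a b, [/\ a != b, a \in Ex, b \in Ex & t = [set a; b]].
Proof.
have [hout hin hcut hnn] := hP.
rewrite !in_setU => /orP [/orP [] | ].
- by move=> /imsetP [u _ ->]; apply: pair_of.
- by move=> /imsetP [u _ ->]; apply: pair_of.
- move=> /imsetP [S]; rewrite inE => /andP [_ /eqP hS] ->; exact: pair_of.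
Qed.

Lemma hA_D t : t \in D -> exists a b, [/\ a != b, a \in Ex, b \in Ex & t = [set a; b]].
Proof. by move=> h; apply: hA_DT; rewrite in_setU h. Qed.

Lemma hnb_D e : e \in Ex -> exists f, adj D e f.
Proof.
have [hout hin hcut hnn] := hP.
move=> eE; have [a [b [ab aE bE h]]] := pair_of (hout (atail e)).
have : e \in deltaout (atail e) :&: Ex by rewrite in_setI eE andbT inE.
have hD : [set a; b] \in D by rewrite -h in_setU; apply/orP; left; apply: imset_f.
rewrite h !inE => /orP [] /eqP ->; first by exists b.
by exists a; rewrite /adj setUC.
Qed.

Lemma hnb_sup (A : {set {set darc n}}) : D \subset A -> forall e, e \in Ex -> exists f, adj A e f.
Proof.
move=> sDA e /hnb_D [f hf]; exists f; exact: (subsetP sDA).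
Qed.

Definition oo a := if a \in Ex then oth (deltaout (atail a) :&: Ex) a else a.
Definition ii a := if a \in Ex then oth (deltain (ahead a) :&: Ex) a else a.

Lemma oo_props a : a \in Ex ->
  [/\ oo a \in Ex, oo a != a, oo (oo a) = a & deltaout (atail a) :&: Ex = [set a; oo a]].
Proof.
have [hout hin hcut hnn] := hP.
move=> aE; have hc2 := card_of_one (hout (atail a)).
have aS : a \in deltaout (atail a) :&: Ex by rewrite in_setI aE andbT inE.
have [p1 p2 p3 p4] := oth_props hc2 aS.
have oE : oth (deltaout (atail a) :&: Ex) a \in Ex by move: p1; rewrite inE => /andP [].
have ot : atail (oth (deltaout (atail a) :&: Ex) a) = atail a.
  by move: p1; rewrite !inE => /andP [/eqP].
by rewrite /oo aE oE ot p3.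
Qed.

Lemma ii_props a : a \in Ex ->
  [/\ ii a \in Ex, ii a != a, ii (ii a) = a & deltain (ahead a) :&: Ex = [set a; ii a]].
Proof.
have [hout hin hcut hnn] := hP.
move=> aE; have hc2 := card_of_one (hin (ahead a)).
have aS : a \in deltain (ahead a) :&: Ex by rewrite in_setI aE andbT inE.
have [p1 p2 p3 p4] := oth_props hc2 aS.
have oE : oth (deltain (ahead a) :&: Ex) a \in Ex by move: p1; rewrite inE => /andP [].
have ot : ahead (oth (deltain (ahead a) :&: Ex) a) = ahead a.
  by move: p1; rewrite !inE => /andP [/eqP].
by rewrite /ii aE oE ot p3.
Qed.

Lemma oo_inv : involutive oo.
Proof.
move=> a; case aE: (a \in Ex); first by have [] := oo_props aE.
by rewrite /oo aE aE.
Qed.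

Lemma ii_inv : involutive ii.
Proof.
move=> a; case aE: (a \in Ex); first by have [] := ii_props aE.
by rewrite /ii aE aE.
Qed.

Lemma adjD_cases a b : adj D a b -> b = oo a \/ b = ii a.
Proof.
move=> h; have [ab aE bE] := adj_props hA_D h.
move: h; rewrite /adj in_setU => /orP [] /imsetP [u _ hu].
  have : a \in deltaout u :&: Ex by rewrite -hu !inE eqxx.
  rewrite !inE => /andP [/eqP hu' _]; rewrite -hu' in hu.
  have [_ _ _ h4] := oo_props aE.
  have : b \in [set a; oo a] by rewrite -h4 -hu !inE eqxx orbT.
  rewrite !inE => /orP [/eqP hb | /eqP ->]; last by left.
  by move: ab; rewrite hb eqxx.
have : a \in deltain u :&: Ex by rewrite -hu !inE eqxx.
rewrite !inE => /andP [/eqP hu' _]; rewrite -hu' in hu.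
have [_ _ _ h4] := ii_props aE.
have : b \in [set a; ii a] by rewrite -h4 -hu !inE eqxx orbT.
rewrite !inE => /orP [/eqP hb | /eqP ->]; last by right.
by move: ab; rewrite hb eqxx.
Qed.

Lemma bipD e : e \in Ex -> bip D e.
Proof.
move=> eE.
pose g := ii \o oo.
have ginj : injective g.
  by apply: (can_inj (g := oo \o ii)) => a /=; rewrite ii_inv oo_inv.
pose Rr (x : darc n * bool) := if x.2 then fconnect g e (oo x.1) else fconnect g e x.1.
have clos : forall x y, Rr x -> hrel D x y -> Rr y.
  move=> [a b] [c d] Rx /andP [/= hac /eqP /= ->].
  case: (adjD_cases hac) => ->; case: b Rx; rewrite /Rr /= => Rx.
  - by [].
  - by rewrite oo_inv.
  - apply: connect_trans Rx _.
    have -> : ii a = g (oo a) by rewrite /g /= oo_inv.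
    exact: fconnect1.
  - apply: connect_trans Rx _; rewrite fconnect_sym //.
    have {2}-> : a = g (oo (ii a)) by rewrite /g /= oo_inv ii_inv.
    exact: fconnect1.
rewrite /bip; apply/negP => h.
have hh : hc D (e, false) (e, true) by rewrite hc_sym.
have := @connect_closed _ (hrel D) (fun x => is_true (Rr x)) _ _ clos hh.
rewrite /Rr /= => /(_ (connect0 _ _)) /iter_findex hk.
have H1 : forall a, a \in Ex -> oo a \in Ex by move=> a /oo_props [].
have H2 : forall a, a \in Ex -> ii a \in Ex by move=> a /ii_props [].
have H3 : forall a, a \in Ex -> oo a != a by move=> a /oo_props [].
have H4 : forall a, a \in Ex -> ii a != a by move=> a /ii_props [].
have := @pal _ Ex oo ii oo_inv ii_inv H1 H2 H3 H4 (findex g e (oo e)) e eE.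
by rewrite -/g hk oo_inv eqxx.
Qed.

End Main.

Lemma arith2 (a a' b b' : nat) (d d' : bool) :
  a = a' -> b = b' -> d = d' -> a' = (b' + d')%N -> a%:Z - d%:Z = b%:Z.
Proof. by move=> -> -> -> ->; rewrite PoszD addrK. Qed.

Section Main2.
Variable n : nat.
Variable R : realType.
Variable xb : darc n -> R.
Hypothesis hP : Pn xb.
Hypothesis hhalf : forall e, xb e = 0 \/ xb e = 2^-1.

Local Notation Ex := (Ehalf xb).
Local Notation D := (Dset xb).
Local Notation T := (Tset xb).

Variable ts : seq {set darc n}.
Hypothesis hts : forall t, t \in ts -> t \in T.

Lemma Aj_sub j : Aj D ts j \subset D :|: T.
Proof.
apply/subsetP => x; rewrite !inE => /orP [-> // | /mem_take /hts ->]; by rewrite orbT.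
Qed.

Lemma hA_Aj j t : t \in Aj D ts j ->
  exists a b, [/\ a != b, a \in Ex, b \in Ex & t = [set a; b]].
Proof. by move=> h; apply: (hA_DT hP hhalf); apply: (subsetP (Aj_sub j)). Qed.

Lemma hnb_Aj j : forall e, e \in Ex -> exists f, adj (Aj D ts j) e f.
Proof. by apply: (hnb_sup hP hhalf); apply: subsetUl. Qed.

Lemma Aj_succ j : (j < size ts)%N -> Aj D ts j.+1 = nth set0 ts j |: Aj D ts j.
Proof.
move=> hj; rewrite /Aj (take_nth set0 hj); apply/setP => x.
by rewrite !inE mem_rcons in_cons orbCA.
Qed.

Lemma Aj0 : Aj D ts 0 = D.
Proof. by apply/setP => x; rewrite /Aj !inE take0 in_nil orbF. Qed.

Lemma part_a j : (j <= size ts)%N ->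
  cval Ex D ts j = (#|nonshorted_pairs Ex (Aj D ts j)|)%:Z.
Proof.
elim: j => [_ | j IH hj].
  rewrite Aj0 /= (all_bip_card (hA_D hP hhalf) (hnb_D hP hhalf) (bipD hP hhalf)) mulnK //.
rewrite /= IH ?(ltnW hj) //.
set t := nth set0 ts j.
have tT : t \in D :|: T by rewrite in_setU hts ?orbT // mem_nth.
have [a [b [ab aE bE ht]]] := hA_DT hP hhalf tT.
have ht2 : size (enum t) = 2%N by rewrite -cardE ht cards2 ab.
case Et: (enum t) ht2 => [|e1 [|e2 [|? ?]]] // _.
have htE : t = [set e1; e2].
  by apply/setP => x; rewrite -mem_enum Et !inE.
have e12 : e1 != e2.
  by have := enum_uniq (pred_of_set t); rewrite Et /= inE andbT.
have tsub : forall x, x \in t -> x \in Ex.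
  by move=> x; rewrite ht in_set2 => /orP [] /eqP ->.
have e1E : e1 \in Ex by apply: tsub; rewrite htE !inE eqxx.
have e2E : e2 \in Ex by apply: tsub; rewrite htE !inE eqxx orbT.
have E5 := decr_char (@hA_Aj j) (@hnb_Aj j) Et e1E e2E.
have E1 := card_ns (@hA_Aj j) (@hnb_Aj j).
have E2 := card_ns (@hA_Aj j.+1) (@hnb_Aj j.+1).
have E3 : Aj D ts j.+1 = [set e1; e2] |: Aj D ts j.
  by rewrite Aj_succ //; congr (_ |: _); exact: htE.
have E2' := etrans E2 (congr1 (fun A => #|FK Ex A|) E3).
have E4 := step_card (Aj D ts j) e12 e1E e2E.
exact: (arith2 E1 E2' E5 E4).
Qed.

End Main2.

Section LP.
Variable n : nat.
Variable R : realType.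
Variable xb : darc n -> R.
Hypothesis hP : Pn xb.
Hypothesis hhalf : forall e, xb e = 0 \/ xb e = 2^-1.

Local Notation Ex := (Ehalf xb).
Local Notation D := (Dset xb).
Local Notation T := (Tset xb).
Local Notation AT := (Dset xb :|: Tset xb).

Lemma sum_pair (d : darc n -> R) a b : a != b ->
  \sum_(e in [set a; b]) d e = d a + d b.
Proof. by move=> ab; rewrite big_setU1 ?inE // big_set1. Qed.

Lemma AT_cases t : t \in AT ->
  (exists u, t = deltaout u :&: Ex) \/ (exists u, t = deltain u :&: Ex) \/
  (exists2 S, S \in calS n & [/\ xsum xb (deltaS S) = 1 & t = deltaS S :&: Ex]).
Proof.
rewrite !in_setU => /orP [/orP [] | ].
- by move=> /imsetP [u _ ->]; left; exists u.
- by move=> /imsetP [u _ ->]; right; left; exists u.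
- move=> /imsetP [S]; rewrite inE => /andP [hS /eqP hS1] ->; right; right.
  by exists S.
Qed.

Lemma perturb (d : darc n -> R) :
  (forall e, e \notin Ex -> d e = 0) -> (forall e, - 6^-1 <= d e <= 6^-1) ->
  (forall t, t \in AT -> \sum_(e in t) d e = 0) ->
  Pn (fun e => xb e + d e).
Proof.
move=> hd hb hs; have [hout hin hcut hnn] := hP.
have hsum : forall F, xsum (fun e => xb e + d e) F = xsum xb F + \sum_(e in F :&: Ex) d e.
  by move=> F; rewrite /xsum big_split /= (sum_Ex _ hd).
split.
- move=> w; rewrite hsum hout hs ?addr0 //.
  by rewrite !in_setU; apply/orP; left; apply/orP; left; apply: imset_f.
- move=> w; rewrite hsum hin hs ?addr0 //.
  by rewrite !in_setU; apply/orP; left; apply/orP; right; apply: imset_f.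
- move=> S hS; case hS1: (xsum xb (deltaS S) == 1).
    rewrite hsum (eqP hS1) hs ?addr0 //.
    rewrite in_setU; apply/orP; right; apply: imset_f.
    by rewrite inE hS hS1.
  have h1 := hcut S hS; rewrite (xsum_half hhalf) in h1 hS1.
  set k := #|deltaS S :&: Ex| in h1 hS1.
  have k2 : (2 <= k)%N by rewrite -(ler_nat R); lra.
  have k3 : (3 <= k)%N.
    rewrite ltn_neqAle k2 andbT; apply/negP => /eqP hk.
    by move: hS1; rewrite -hk mulVf ?eqxx // pnatr_eq0.
  rewrite /xsum (@sum_Ex n R xb _ (deltaS S)).
    apply: le_trans (_ : \sum_(e in deltaS S :&: Ex) (3^-1 : R) <= _).
      rewrite sumr_const -/k -mulr_natr.
      have : (3 : R) <= k%:R by rewrite ler_nat.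
      lra.
    apply: ler_sum => e; rewrite inE => /andP [_ eE].
    by rewrite (xb_in eE); have := hb e; lra.
  by move=> e eE; rewrite (xb_out hhalf eE) hd // add0r.
- move=> e; case eE: (e \in Ex).
    by rewrite (xb_in eE); have := hb e; lra.
  by rewrite (xb_out hhalf) ?eE // hd ?eE // addr0.
Qed.

Lemma zero_out y z l : Pn y -> Pn z -> 0 < l < 1 ->
  (forall e, xb e = l * y e + (1 - l) * z e) ->
  forall e, e \notin Ex -> y e = 0 /\ z e = 0.
Proof.
move=> [_ _ _ hy] [_ _ _ hz] /andP [l0 l1] hx e eE.
have hx0 := hx e; rewrite (xb_out hhalf eE) in hx0.
have a := mulr_ge0 (ltW l0) (hy e).
have b : 0 <= (1 - l) * z e by apply: mulr_ge0 => //; rewrite subr_ge0 ltW.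
have ha : l * y e = 0 by lra.
have hb : (1 - l) * z e = 0 by lra.
move/eqP: ha; rewrite mulf_eq0 gt_eqF //= => /eqP ->.
move/eqP: hb; rewrite mulf_eq0 gt_eqF /= ?subr_gt0 // => /eqP ->.
by [].
Qed.

Lemma tight_zero y z l F : Pn y -> Pn z -> 0 < l < 1 ->
  (forall e, xb e = l * y e + (1 - l) * z e) ->
  xsum xb F = 1 -> 1 <= xsum y F -> 1 <= xsum z F ->
  \sum_(e in F :&: Ex) (y e - z e) = 0.
Proof.
move=> Py Pz hl hx hF hyF hzF.
have hz0 := zero_out Py Pz hl hx.
rewrite -(@sum_Ex n R xb _ F); last by move=> e /hz0 [-> ->]; rewrite subrr.
rewrite sumrB.
move: hl => /andP [l0 l1].
have hxF : xsum xb F = l * xsum y F + (1 - l) * xsum z F.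
  by rewrite /xsum (eq_bigr _ (fun e _ => hx e)) big_split /= -!mulr_sumr.
rewrite -/(xsum y F) -/(xsum z F).
set Y := xsum y F in hyF hxF *; set Z := xsum z F in hzF hxF *.
have a : 0 <= l * (Y - 1) by apply: mulr_ge0; lra.
have b : 0 <= (1 - l) * (Z - 1) by apply: mulr_ge0; lra.
have ha : l * (Y - 1) = 0 by lra.
have hb : (1 - l) * (Z - 1) = 0 by lra.
move/eqP: ha; rewrite mulf_eq0 gt_eqF //= subr_eq0 => /eqP ->.
move/eqP: hb; rewrite mulf_eq0 gt_eqF /= ?subr_gt0 // subr_eq0 => /eqP ->.
by rewrite subrr.
Qed.

Lemma ext_of_Q : (forall e, e \in Ex -> ~~ bip AT e) -> extreme_point (@Pn n R) xb.
Proof.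
move=> hQ; split => // y z l Py Pz hl hx.
have hz0 := zero_out Py Pz hl hx.
pose d e := y e - z e.
have hs : forall t, t \in AT -> \sum_(e in t) d e = 0.
  have [hyo hyi hyc hyn] := Py; have [hzo hzi hzc hzn] := Pz.
  have [hout hin hcut hnn] := hP.
  move=> t /AT_cases [[u ->] | [[u ->] | [S hS [hS1 ->]]]].
  - by apply: (tight_zero Py Pz hl hx) => //; rewrite ?hyo ?hzo.
  - by apply: (tight_zero Py Pz hl hx) => //; rewrite ?hyi ?hzi.
  - by apply: (tight_zero Py Pz hl hx) => //; [apply: hyc | apply: hzc].
pose phi (x : darc n * bool) := if x.2 then - d x.1 else d x.1.
have hphi : forall x x', hrel AT x x' -> phi x = phi x'.
  move=> [a b] [c c'] /andP [/= hac /eqP /= ->].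
  have [ac _ _] := adj_props (hA_DT hP hhalf) hac.
  have := hs _ hac; rewrite sum_pair // => hdc.
  by case: b; rewrite /phi /=; lra.
apply: functional_extensionality => e.
case eE: (e \in Ex).
  have := hQ e eE; rewrite /bip negbK => /(connect_inv hphi).
  rewrite /phi /= /d => h; lra.
by have [-> ->] := hz0 e (negbT eE).
Qed.

Lemma Q_of_ext : extreme_point (@Pn n R) xb -> forall e, e \in Ex -> ~~ bip AT e.
Proof.
move=> [_ hext] e0 e0E; apply/negP => hb.
pose dd a : R := if a \in Ex then
  (if hc AT (e0, false) (a, false) then 1 else if hc AT (e0, true) (a, false) then -1 else 0)
  else 0.
have hA := hA_DT hP hhalf.
have dd_out : forall e, e \notin Ex -> dd e = 0 by move=> e /negbTE; rewrite /dd => ->.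
have dd_b : forall e, - 1 <= dd e <= 1.
  move=> e; rewrite /dd; case: (e \in Ex);
    case: (hc AT (e0, false) (e, false)); case: (hc AT (e0, true) (e, false));
    apply/andP; split; lra.
have notboth : forall a, hc AT (e0, false) (a, false) -> hc AT (e0, true) (a, false) -> False.
  move=> a h1 h2; move: hb; rewrite /bip => /negP; apply.
  by apply: hc_trans h2 _; rewrite hc_sym.
have hs : forall t, t \in AT -> \sum_(e in t) dd e = 0.
  move=> t tAT; have [a [b [ab aE bE ht]]] := hA t tAT.
  have hab : adj AT a b by rewrite /adj -ht.
  rewrite ht sum_pair //.
  have E1 : hc AT (e0, false) (b, false) = hc AT (e0, true) (a, false).
    rewrite -(hc_flb AT e0 true a false) /=.
    by rewrite (@hc_edge_eq _ AT (e0, false) (a, true) (b, false)) // /hrel hab.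
  have E2 : hc AT (e0, true) (b, false) = hc AT (e0, false) (a, false).
    rewrite -(hc_flb AT e0 false a false) /=.
    by rewrite (@hc_edge_eq _ AT (e0, true) (a, true) (b, false)) // /hrel hab.
  rewrite /dd aE bE E1 E2.
  case h1: (hc AT (e0, false) (a, false)); case h2: (hc AT (e0, true) (a, false)) => //=.
  - by case: (notboth a h1 h2).
  - by rewrite subrr.
  - by rewrite addrC subrr.
  - by rewrite addr0.
have P1 : Pn (fun e => xb e + 6^-1 * dd e).
  apply: perturb.
  - by move=> e /dd_out ->; rewrite mulr0.
  - move=> e /=; have := dd_b e; move=> /andP [h1 h2]; apply/andP; split; nra.
  - by move=> t /hs; rewrite -mulr_sumr => ->; rewrite mulr0.
have P2 : Pn (fun e => xb e + - (6^-1 * dd e)).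
  apply: perturb.
  - by move=> e /dd_out ->; rewrite mulr0 oppr0.
  - move=> e /=; have := dd_b e; move=> /andP [h1 h2]; apply/andP; split; nra.
  - by move=> t /hs; rewrite sumrN -mulr_sumr => ->; rewrite mulr0 oppr0.
have hl : (0 : R) < (2^-1 : R) < 1 by apply/andP; split; lra.
have hconv : forall e, xb e = 2^-1 * (xb e + 6^-1 * dd e) + (1 - 2^-1) * (xb e + - (6^-1 * dd e)).
  by move=> e; field.
have hyz := hext _ _ (2^-1) P1 P2 hl hconv.
have := congr1 (fun f => f e0) hyz; rewrite /= /dd e0E.
rewrite (_ : hc AT (e0, false) (e0, false) = true) ?hcxx //; lra.
Qed.

End LP.

Lemma cval_mono n (Ex : {set darc n}) D ts j k : (j <= k)%N -> cval Ex D ts k <= cval Ex D ts j.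
Proof.
move=> /subnK <-; elim: (k - j)%N => [|m IH]; first by rewrite add0n.
rewrite addSn /=; apply: le_trans IH; rewrite lerBlDr lerDl //.
Qed.

Theorem mainTheorem9 (R : realType) (n : nat) (hn : (4 <= n)%N)
  (xb : darc n -> R)
  (hP : Pn xb) (hhalf : forall e, xb e = 0 \/ xb e = 2^-1)
  (ts : seq {set darc n}) (huniq : uniq ts)
  (hts : forall t, (t \in ts) = (t \in Tset xb :\: Dset xb)) :
  let Ex := Ehalf xb in
  let D := Dset xb in
  let T := Tset xb in
  [/\ (forall j, (j <= size ts)%N ->
         cval Ex D ts j = (#|nonshorted_pairs Ex (Aj D ts j)|)%:Z),
      extreme_point (@Pn n R) xb <->
        (exists2 j, (j <= size ts)%N & cval Ex D ts j = 0)
    & extreme_point (@Pn n R) xb <->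
        (forall L, L \in circuits Ex (D :|: T) -> shorted Ex (D :|: T) L)].
Proof.
move=> Ex D T.
have hts2 : forall t, t \in ts -> t \in T by move=> t; rewrite hts inE => /andP [].
have pa := part_a hP hhalf hts2.
have hA := hA_DT hP hhalf.
have hnb := hnb_sup hP hhalf (subsetUl D T).
have AjS : Aj D ts (size ts) = D :|: T.
  rewrite /Aj take_size.
  have -> : [set t in ts] = T :\: D by apply/setP => x; rewrite inE hts.
  by rewrite setDE setUIr setUCr setIT.
have QE : (forall L, L \in circuits Ex (D :|: T) -> shorted Ex (D :|: T) L) <->
          (forall e, e \in Ex -> ~~ bip (D :|: T) e).
  split.
    move=> h e eE; rewrite -(shortedC hA hnb eE); apply: h.
    by rewrite (circuitsE hA); apply: imset_f.
  move=> h L; rewrite (circuitsE hA) => /imsetP [e eE ->].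
  by rewrite (shortedC hA hnb eE) h.
have nsE : (forall L, L \in circuits Ex (D :|: T) -> shorted Ex (D :|: T) L) <->
           nonshorted_pairs Ex (D :|: T) = set0.
  split.
    move=> h; apply/eqP; rewrite /nonshorted_pairs imset_eq0; apply/eqP/setP => L.
    by rewrite !inE; apply/negbTE/andP => [[/h -> ]].
  move=> h L hL; apply/negPn/negP => hs.
  have : [set L; dual Ex (D :|: T) L] \in nonshorted_pairs Ex (D :|: T).
    by apply: imset_f; rewrite inE hL hs.
  by rewrite h inE.
have ext := (conj (@Q_of_ext n R xb hP hhalf) (@ext_of_Q n R xb hP hhalf)).
split => //.
- split.
    move=> /(proj1 ext) /(proj2 QE) /(proj1 nsE) h0; exists (size ts) => //.
    by rewrite pa // AjS h0 cards0.
  move=> [j hj hc]; apply: (proj2 ext); apply/(proj1 QE); apply/(proj2 nsE).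
  have h1 := cval_mono Ex D ts hj; rewrite hc pa // AjS in h1.
  apply/eqP; rewrite -cards_eq0; apply/eqP.
  by move: h1; case: #|_|.
- split.
    by move=> /(proj1 ext) /(proj2 QE).
  by move=> /(proj1 QE) /(proj2 ext).
Qed.
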